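(* Fix parameters $0<\varepsilon<f<(1+\varepsilon)/2<1$ and $\sigma>0$. Let $pqr$ be a non-degenerate triangle in $\mathbb{R}^2$ with a designated apex (one of $p,q,r$) and a fixed ordering of its base vertices. Then there exists $\Delta>0$, depending only on the triangle $pqr$, its apex designation, $\varepsilon$, $f$ and $\sigma$, such that the following holds: whenever real values $\tau(p)\le\tau(q)\le\tau(r)$ make the triangle satisfy the adaptive progress constraint $\sigma$, then for every $\delta\in[0,\Delta]$ the values $\tau'(p)=\tau(p)+\delta$, $\tau'(q)=\tau(q)$, $\tau'(r)=\tau(r)$ also make the triangle satisfy the adaptive progress constraint $\sigma$ (with the same apex and base ordering).
   Context: Values at the vertices are extended affinely over the plane; $\tau$ of a midpoint means the value of that affine function. Diminished width: for a triangle written $abc$ with its apex listed first, $\mathrm{dw}(abc):=\min\{(1-\varepsilon)\operatorname{dist}(a,\operatorname{aff}(bc)),\,(1-f)\operatorname{dist}(b,\operatorname{aff}(ac)),\,(1-f)\operatorname{dist}(c,\operatorname{aff}(ab))\}$. Adaptive progress constraint $\sigma$: for a triangle with apex $a$ and base vertices $b,c$ (in the given order), with $d$ the midpoint of $bc$ and $e$ the midpoint of $ac$, require $|\tau(a)-\tau(b)|\le 2\,\mathrm{dw}(dca)\,\sigma$, $|\tau(a)-\tau(d)|\le\mathrm{dw}(abc)\,\sigma$, $|\tau(a)-\tau(c)|\le 2\,\mathrm{dw}(dab)\,\sigma$, and $|\tau(b)-\tau(c)|\le 4\,\mathrm{dw}(ead)\,\sigma$ (first-listed vertex in each $\mathrm{dw}$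 is its apex). *)

(* Defs.v *)
From Stdlib Require Import Reals.
Open Scope R_scope.

Definition pt : Type := (R * R)%type.

Definition midpt (x y : pt) : pt := ((fst x + fst y) / 2, (snd x + snd y) / 2).

Definition dist_line (x y z : pt) : R :=
  Rabs ((fst z - fst y) * (snd x - snd y) - (snd z - snd y) * (fst x - fst y))
  / sqrt ((fst z - fst y) ^ 2 + (snd z - snd y) ^ 2).

(* Diminished width of the triangle abc with apex a (listed first). *)
Definition dw (eps f : R) (a b c : pt) : R :=
  Rmin ((1 - eps) * dist_line a b c)
       (Rmin ((1 - f) * dist_line b a c) ((1 - f) * dist_line c a b)).

(* Adaptive progress constraint sigma for the triangle with apex a and base
   vertices b, c (in that order), with values ta tb tc at a b c; values are
   extended affinely, so tau(d) = (tb + tc)/2 for d the midpoint of bc. *)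
Definition apc (eps f sigma : R) (a b c : pt) (ta tb tc : R) : Prop :=
  let d := midpt b c in
  let e := midpt a c in
  let td := (tb + tc) / 2 in
  Rabs (ta - tb) <= 2 * dw eps f d c a * sigma /\
  Rabs (ta - td) <= dw eps f a b c * sigma /\
  Rabs (ta - tc) <= 2 * dw eps f d a b * sigma /\
  Rabs (tb - tc) <= 4 * dw eps f e a d * sigma.

Definition nondegenerate (p q r : pt) : Prop :=
  (fst q - fst p) * (snd r - snd p) - (snd q - snd p) * (fst r - fst p) <> 0.

Inductive vertex : Type := VP | VQ | VR.

(* Main.v *)
Require Import Defs.
From Stdlib Require Import Reals Lra Lia Psatz.
Open Scope R_scope.

Lemma abs_le_e x b : Rabs x <= b -> -b <= x <= b.
Proof. unfold Rabs; destruct (Rcase_abs x); lra. Qed.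

Definition P4 (X1 X2 X3 X4 ta tb tc : R) : Prop :=
  Rabs (ta - tb) <= X1 /\ Rabs (ta - (tb + tc)/2) <= X2 /\
  Rabs (ta - tc) <= X3 /\ Rabs (tb - tc) <= X4.

Ltac dabs := repeat match goal with
  | H : Rabs _ <= _ |- _ => apply abs_le_e in H
  | H : _ /\ _ |- _ => destruct H end.

Lemma caseA X1 X2 X3 X4 ta tb tc d :
  ta <= tb -> ta <= tc -> P4 X1 X2 X3 X4 ta tb tc -> 0 <= d ->
  d <= X1 -> d <= X2 -> d <= X3 ->
  P4 X1 X2 X3 X4 (ta + d) tb tc.
Proof. unfold P4; intros; dabs; repeat split; apply Rabs_le; lra. Qed.

Lemma caseB X1 X2 X3 X4 ta tb tc d :
  tb <= ta -> tb <= tc -> (tc <= ta \/ d <= 2*X2 - X3) -> P4 X1 X2 X3 X4 ta tb tc -> 0 <= d ->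
  d <= X1 -> d <= X2 -> d <= X4 ->
  P4 X1 X2 X3 X4 ta (tb + d) tc.
Proof. unfold P4; intros; dabs; destruct H1; repeat split; apply Rabs_le; lra. Qed.

Lemma caseC X1 X2 X3 X4 ta tb tc d :
  tc <= ta -> tc <= tb -> (tb <= ta \/ d <= 2*X2 - X1) -> P4 X1 X2 X3 X4 ta tb tc -> 0 <= d ->
  d <= X3 -> d <= X2 -> d <= X4 ->
  P4 X1 X2 X3 X4 ta tb (tc + d).
Proof. unfold P4; intros; dabs; destruct H1; repeat split; apply Rabs_le; lra. Qed.

Lemma lt_form (k k' N N' D D' : R): 0 < D -> 0 < D' -> 0 <= k -> 0 < k' ->
  k^2*N^2*D' < k'^2*N'^2*D -> k * (Rabs N / sqrt D) < k' * (Rabs N' / sqrt D').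
Proof.
  intros HD HD' Hk Hk' H.
  pose proof (sqrt_lt_R0 _ HD) as Hs. pose proof (sqrt_lt_R0 _ HD') as Ht.
  pose proof (sqrt_sqrt _ (Rlt_le _ _ HD)) as Hs2.
  pose proof (sqrt_sqrt _ (Rlt_le _ _ HD')) as Ht2.
  set (s := sqrt D) in *. set (t := sqrt D') in *.
  pose proof (pow2_abs N) as HN. pose proof (pow2_abs N') as HN'.
  pose proof (Rabs_pos N). pose proof (Rabs_pos N').
  assert (HX : k * Rabs N * t < k' * Rabs N' * s).
  { set (X := k * Rabs N * t). set (Y := k' * Rabs N' * s).
    assert (0 <= X) by (unfold X; apply Rmult_le_pos; [apply Rmult_le_pos|]; lra).
    assert (0 <= Y) by (unfold Y; apply Rmult_le_pos; [apply Rmult_le_pos|]; lra).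
    assert (X^2 < Y^2).
    { unfold X, Y. replace ((k * Rabs N * t)^2) with (k^2 * Rabs N ^2 * (t*t)) by ring.
      replace ((k' * Rabs N' * s)^2) with (k'^2 * Rabs N' ^2 * (s*s)) by ring.
      rewrite HN, HN', Hs2, Ht2. lra. }
    nra. }
  replace (k * (Rabs N / s)) with ((k * Rabs N * t) * / (s*t)) by (field; lra).
  replace (k' * (Rabs N' / t)) with ((k' * Rabs N' * s) * / (s*t)) by (field; lra).
  apply Rmult_lt_compat_r; [apply Rinv_0_lt_compat; nra | exact HX].
Qed.

Lemma ge_form (k k' N N' D D' : R): 0 < D -> 0 < D' -> 0 < k -> 0 < k' ->
  k * (Rabs N / sqrt D) <= k' * (Rabs N' / sqrt D') -> k^2*N^2*D' <= k'^2*N'^2*D.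
Proof.
  intros. destruct (Rle_or_lt (k^2*N^2*D') (k'^2*N'^2*D)); auto.
  pose proof (lt_form k' k N' N D' D H0 H (Rlt_le _ _ H2) H1 H4). lra.
Qed.

Definition Ncr (x y z : pt) : R :=
  (fst z - fst y) * (snd x - snd y) - (snd z - snd y) * (fst x - fst y).
Definition Dn (y z : pt) : R := (fst z - fst y) ^ 2 + (snd z - snd y) ^ 2.

Lemma dl_eq x y z : dist_line x y z = Rabs (Ncr x y z) / sqrt (Dn y z).
Proof. reflexivity. Qed.

Lemma Dn_pos x y z : Ncr x y z <> 0 -> 0 < Dn y z.
Proof.
  unfold Ncr, Dn; intros H.
  destruct (Rle_or_lt ((fst z - fst y) ^ 2 + (snd z - snd y) ^ 2) 0); auto.
  exfalso; apply H.
  pose proof (pow2_ge_0 (fst z - fst y)). pose proof (pow2_ge_0 (snd z - snd y)).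
  assert (fst z - fst y = 0) by (destruct (Rtotal_order (fst z - fst y) 0) as [h|[h|h]]; [nra|auto|nra]). assert (snd z - snd y = 0) by (destruct (Rtotal_order (snd z - snd y) 0) as [h|[h|h]]; [nra|auto|nra]).
  rewrite H3, H4; ring.
Qed.

Lemma dl_pos x y z : Ncr x y z <> 0 -> 0 < dist_line x y z.
Proof.
  intro H; rewrite dl_eq. pose proof (Dn_pos _ _ _ H).
  apply Rdiv_lt_0_compat; [apply Rabs_pos_lt; auto | apply sqrt_lt_R0; auto].
Qed.

Lemma dw_pos eps f x y z : eps < 1 -> f < 1 ->
  Ncr x y z <> 0 -> Ncr y x z <> 0 -> Ncr z x y <> 0 -> 0 < dw eps f x y z.
Proof.
  intros. unfold dw. pose proof (dl_pos _ _ _ H1). pose proof (dl_pos _ _ _ H2).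
  pose proof (dl_pos _ _ _ H3).
  apply Rmin_glb_lt; [|apply Rmin_glb_lt]; apply Rmult_lt_0_compat; lra.
Qed.

Lemma dl_sym x y z : dist_line x y z = dist_line x z y.
Proof.
  rewrite !dl_eq. f_equal.
  - replace (Ncr x z y) with (- Ncr x y z) by (unfold Ncr; ring). now rewrite Rabs_Ropp.
  - f_equal. unfold Dn; ring.
Qed.

Lemma dw_sym eps f a b c : dw eps f a b c = dw eps f a c b.
Proof.
  unfold dw. rewrite (dl_sym a b c). rewrite (Rmin_comm ((1 - f) * dist_line b a c)).
  reflexivity.
Qed.

Lemma midpt_sym b c : midpt b c = midpt c b.
Proof. unfold midpt. f_equal; field. Qed.

Lemma G eps f a b c : 0 < eps -> eps < f -> f < (1 + eps) / 2 -> Ncr a b c <> 0 ->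
  dw eps f (midpt b c) a b < dw eps f a b c.
Proof.
  intros He Hef Hf HK.
  set (d := midpt b c).
  set (K := Ncr a b c) in *.
  assert (HK2 : 0 < K^2) by (destruct (Rtotal_order K 0) as [h|[h|h]]; [nra|contradiction|nra]).  
  destruct a as [a1 a2], b as [b1 b2], c as [c1 c2].
  assert (E1 : Ncr (a1,a2) d (b1,b2) ^2 = K^2/4) by (unfold K, Ncr, d, midpt; simpl; field).
  assert (E2 : Dn d (b1,b2) = Dn (b1,b2) (c1,c2) / 4) by (unfold Dn, d, midpt; simpl; field).
  assert (E3 : Ncr d (a1,a2) (b1,b2) ^2 = K^2/4) by (unfold K, Ncr, d, midpt; simpl; field).
  assert (E4 : Ncr (c1,c2) (a1,a2) (b1,b2) ^2 = K^2) by (unfold K, Ncr; simpl; ring).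
  assert (E5 : Ncr (b1,b2) (a1,a2) (c1,c2) ^2 = K^2) by (unfold K, Ncr; simpl; ring).
  assert (E6 : Ncr (b1,b2) d (a1,a2) ^2 = K^2/4) by (unfold K, Ncr, d, midpt; simpl; field).
  assert (E7 : Dn d (a1,a2) = (2 * Dn (a1,a2) (b1,b2) + 2 * Dn (a1,a2) (c1,c2) - Dn (b1,b2) (c1,c2))/4)
    by (unfold Dn, d, midpt; simpl; field).
  assert (E8 : Dn (a1,a2) (b1,b2) = (b1-a1)^2 + (b2-a2)^2) by reflexivity.
  assert (Nbc : 0 < Dn (b1,b2) (c1,c2)).
  { apply (Dn_pos (a1,a2)). exact HK. }
  assert (Nac : 0 < Dn (a1,a2) (c1,c2)).
  { apply (Dn_pos (b1,b2)). intro H; rewrite H in E5. nra. }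
  assert (Nab : 0 < Dn (a1,a2) (b1,b2)).
  { apply (Dn_pos (c1,c2)). intro H; rewrite H in E4. nra. }
  assert (Ndb : 0 < Dn d (b1,b2)) by (rewrite E2; lra).
  assert (Nda : 0 < Dn d (a1,a2)).
  { apply (Dn_pos (b1,b2)). intro H. assert (Ncr (b1, b2) d (a1, a2) ^ 2 = 0) by (rewrite H; ring). lra. }
  assert (Hfe : (1-f)^2 < (1-eps)^2) by nra.
  assert (Hfe2 : (1-eps)^2/4 < (1-f)^2) by nra.
  unfold dw. rewrite !dl_eq.
  set (C := Rmin _ _).
  assert (C1 : C <= (1 - eps) * (Rabs (Ncr d (a1, a2) (b1, b2)) / sqrt (Dn (a1, a2) (b1, b2)))) by apply Rmin_l.
  assert (C2 : C <= (1 - f) * (Rabs (Ncr (a1,a2) d (b1, b2)) / sqrt (Dn d (b1, b2)))).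
  { unfold C. eapply Rle_trans; [apply Rmin_r| apply Rmin_l]. }
  assert (C3 : C <= (1 - f) * (Rabs (Ncr (b1,b2) d (a1, a2)) / sqrt (Dn d (a1, a2)))).
  { unfold C. eapply Rle_trans; [apply Rmin_r| apply Rmin_r]. }
  clearbody C.
  apply Rmin_glb_lt; [|apply Rmin_glb_lt].
  - eapply Rle_lt_trans; [exact C2|]. apply lt_form; try lra.
    rewrite E1, E2. fold K. 
    replace ((1 - f) ^ 2 * (K ^ 2 / 4) * Dn (b1, b2) (c1, c2)) with
      ((1 - f) ^ 2 * (K^2 * Dn (b1, b2) (c1, c2)/4)) by field.
    replace ((1 - eps) ^ 2 * K ^ 2 * (Dn (b1, b2) (c1, c2) / 4)) with
      ((1 - eps) ^ 2 * (K^2 * Dn (b1, b2) (c1, c2)/4)) by field.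
    apply Rmult_lt_compat_r; auto. nra.
  - destruct (Rlt_or_le ((1 - f) * (Rabs (Ncr (a1,a2) d (b1, b2)) / sqrt (Dn d (b1, b2))))
       ((1 - f) * (Rabs (Ncr (b1, b2) (a1, a2) (c1, c2)) / sqrt (Dn (a1, a2) (c1, c2))))) as [Hl|Hl].
    + lra.
    + apply ge_form in Hl; try lra.
      eapply Rle_lt_trans; [exact C3|]. apply lt_form; try lra.
      rewrite E5, E2 in Hl. rewrite E1 in Hl. rewrite E6, E5, E7.
      assert (Dn (b1, b2) (c1, c2) <= Dn (a1, a2) (c1, c2)).
      { assert (0 < (1-f)^2 * K^2) by nra. nra. }
      set (m := (1-f)^2 * K^2). assert (0 < m) by (unfold m; nra).
      replace ((1 - f) ^ 2 * (K ^ 2 / 4) * Dn (a1, a2) (c1, c2)) with (m * (Dn (a1, a2) (c1, c2)/4)) by (unfold m; field).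
      replace ((1 - f) ^ 2 * K ^ 2 * ((2 * Dn (a1, a2) (b1, b2) + 2 * Dn (a1, a2) (c1, c2) - Dn (b1, b2) (c1, c2)) / 4))
        with (m * ((2 * Dn (a1, a2) (b1, b2) + 2 * Dn (a1, a2) (c1, c2) - Dn (b1, b2) (c1, c2)) / 4)) by (unfold m; field).
      apply Rmult_lt_compat_l; lra.
  - eapply Rle_lt_trans; [exact C1|]. apply lt_form; try lra.
    rewrite E3, E4.
    replace ((1 - eps) ^ 2 * (K ^ 2 / 4) * Dn (a1, a2) (b1, b2)) with
      ((1 - eps) ^ 2/4 * (K^2 * Dn (a1, a2) (b1, b2))) by field.
    replace ((1 - f) ^ 2 * K ^ 2 * Dn (a1, a2) (b1, b2)) with
      ((1 - f) ^ 2 * (K^2 * Dn (a1, a2) (b1, b2))) by field.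
    apply Rmult_lt_compat_r; [nra | lra].
Qed.

Lemma apc_P4 eps f sigma a b c ta tb tc :
  apc eps f sigma a b c ta tb tc <->
  P4 (2 * dw eps f (midpt b c) c a * sigma) (dw eps f a b c * sigma)
     (2 * dw eps f (midpt b c) a b * sigma) (4 * dw eps f (midpt a c) a (midpt b c) * sigma) ta tb tc.
Proof. unfold apc, P4. tauto. Qed.

Lemma geom eps f a b c : 0 < eps -> eps < f -> f < (1 + eps) / 2 -> (1 + eps) / 2 < 1 ->
  Ncr a b c <> 0 ->
  0 < dw eps f (midpt b c) c a /\ 0 < dw eps f a b c /\ 0 < dw eps f (midpt b c) a b /\
  0 < dw eps f (midpt a c) a (midpt b c) /\
  dw eps f (midpt b c) a b < dw eps f a b c /\ dw eps f (midpt b c) c a < dw eps f a b c.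
Proof.
  intros He Hef Hf Hf2 HK.
  assert (e1 : eps < 1) by lra. assert (f1 : f < 1) by lra.
  destruct a as [a1 a2], b as [b1 b2], c as [c1 c2].
  assert (HK' : Ncr (a1,a2) (c1,c2) (b1,b2) <> 0) by (intro H; apply HK; unfold Ncr in *; simpl in *; lra).
  repeat split.
  - apply dw_pos; auto; intro H; apply HK; unfold Ncr, midpt in *; simpl in *; lra.
  - apply dw_pos; auto; intro H; apply HK; unfold Ncr, midpt in *; simpl in *; lra.
  - apply dw_pos; auto; intro H; apply HK; unfold Ncr, midpt in *; simpl in *; lra.
  - apply dw_pos; auto; intro H; apply HK; unfold Ncr, midpt in *; simpl in *; lra.
  - apply G; auto.
  - rewrite dw_sym, midpt_sym, (dw_sym eps f (a1,a2)). apply G; auto.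
Qed.

Theorem mainTheorem8 (eps f sigma : R)
  (Heps : 0 < eps) (Hef : eps < f) (Hf1 : f < (1 + eps) / 2) (Hf2 : (1 + eps) / 2 < 1)
  (Hsigma : 0 < sigma)
  (pos : vertex -> pt) (Hnd : nondegenerate (pos VP) (pos VQ) (pos VR))
  (va vb vc : vertex) (Hab : va <> vb) (Hac : va <> vc) (Hbc : vb <> vc) :
  exists Delta : R, 0 < Delta /\
    forall tau : vertex -> R,
      tau VP <= tau VQ -> tau VQ <= tau VR ->
      apc eps f sigma (pos va) (pos vb) (pos vc) (tau va) (tau vb) (tau vc) ->
      forall delta : R, 0 <= delta -> delta <= Delta ->
        let tau' := fun v => match v with VP => tau VP + delta | _ => tau v end in
        apc eps f sigma (pos va) (pos vb) (pos vc) (tau' va) (tau' vb) (tau' vc).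
Proof.
  assert (HK : Ncr (pos va) (pos vb) (pos vc) <> 0).
  { unfold nondegenerate in Hnd. revert Hnd.
    destruct va, vb, vc; try congruence;
    destruct (pos VP) as [p1 p2], (pos VQ) as [q1 q2], (pos VR) as [r1 r2]; intros Hnd H; apply Hnd; unfold Ncr in H; simpl in H; simpl; lra. }
  destruct (geom eps f (pos va) (pos vb) (pos vc) Heps Hef Hf1 Hf2 HK)
    as [g1 [g2 [g3 [g4 [g5 g6]]]]].
  set (X1 := 2 * dw eps f (midpt (pos vb) (pos vc)) (pos vc) (pos va) * sigma).
  set (X2 := dw eps f (pos va) (pos vb) (pos vc) * sigma).
  set (X3 := 2 * dw eps f (midpt (pos vb) (pos vc)) (pos va) (pos vb) * sigma).
  set (X4 := 4 * dw eps f (midpt (pos va) (pos vc)) (pos va) (midpt (pos vb) (pos vc)) * sigma).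
  assert (h1 : 0 < X1) by (unfold X1; apply Rmult_lt_0_compat; lra).
  assert (h2 : 0 < X2) by (unfold X2; apply Rmult_lt_0_compat; lra).
  assert (h3 : 0 < X3) by (unfold X3; apply Rmult_lt_0_compat; lra).
  assert (h4 : 0 < X4) by (unfold X4; apply Rmult_lt_0_compat; lra).
  assert (h5 : 0 < 2 * X2 - X3) by (unfold X2, X3; nra).
  assert (h6 : 0 < 2 * X2 - X1) by (unfold X2, X1; nra).
  exists (Rmin X1 (Rmin X2 (Rmin X3 (Rmin X4 (Rmin (2 * X2 - X3) (2 * X2 - X1)))))).
  split.
  { repeat apply Rmin_glb_lt; auto. }
  intros tau Hpq Hqr Happ delta Hd0 HdD tau'.
  pose proof (proj1 (apc_P4 _ _ _ _ _ _ _ _ _) Happ) as Happ'. clear Happ. apply (proj2 (apc_P4 _ _ _ _ _ _ _ _ _)). fold X1 X2 X3 X4 in Happ' |- *.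
  assert (d1 : delta <= X1) by (eapply Rle_trans; [exact HdD| apply Rmin_l]).
  assert (d2 : delta <= X2) by (eapply Rle_trans; [exact HdD|];
     repeat (apply Rmin_l || (eapply Rle_trans; [apply Rmin_r|]))).
  assert (d3 : delta <= X3) by (eapply Rle_trans; [exact HdD|];
     do 2 (eapply Rle_trans; [apply Rmin_r|]); apply Rmin_l).
  assert (d4 : delta <= X4) by (eapply Rle_trans; [exact HdD|];
     do 3 (eapply Rle_trans; [apply Rmin_r|]); apply Rmin_l).
  assert (d5 : delta <= 2 * X2 - X3) by (eapply Rle_trans; [exact HdD|];
     do 4 (eapply Rle_trans; [apply Rmin_r|]); apply Rmin_l).
  assert (d6 : delta <= 2 * X2 - X1) by (eapply Rle_trans; [exact HdD|];
     do 5 (eapply Rle_trans; [apply Rmin_r|]); apply Rle_refl).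
  clearbody X1 X2 X3 X4. unfold tau'.
  destruct va, vb, vc; try congruence.
  - apply caseA; auto; lra.
  - apply caseA; auto; lra.
  - apply caseB; auto; lra.
  - apply caseC; auto; lra.
  - apply caseB; auto; lra.
  - apply caseC; auto; lra.
Qed.
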